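(* Let $\mathcal I,\mathcal J,\mathcal K$ be ideals on $\omega$ and let $X$ be a nonempty topological space. (1) Each of the following implies the next: (a) $|X|<\mathfrak b_s(\mathcal J,\mathcal J,\mathcal I)$; (b) for every sequence $(f_n)$ in $\mathcal C(X)$, $\mathcal I$-pointwise convergence to $0$ implies $\mathcal J$-quasi-normal convergence to $0$; (c) $\mathcal I\subseteq\mathcal J$. (2) Each of the following implies the next: (a) $|X|<\mathrm{add}_\omega(\mathcal J,\mathcal K)$; (b) for every $(f_n)$ in $\mathcal C(X)$, $\mathcal J$-quasi-normal convergence to $0$ implies $\mathcal K$-$\sigma$-uniform convergence to $0$; (c) $\mathcal J\subseteq\mathcal K$. (3) Each of the following implies the next: (a) $|X|<\mathfrak b_\sigma(\mathcal I,\mathcal K)$; (b) for every $(f_n)$ in $\mathcal C(X)$, $\mathcal I$-pointwise convergence to $0$ implies $\mathcal K$-$\sigma$-uniform convergence to $0$; (c) $\mathcal I\subseteq\mathcal K$.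
   Context: An ideal on $\omega$ is a family $\mathcal I\subseteq\mathcal P(\omega)$ closed under finite unions and subsets, containing all finite sets, with $\omega\notin\mathcal I$. A real sequence $(a_n)$ is $\mathcal I$-convergent to $0$ if $\{n:|a_n|\ge\varepsilon\}\in\mathcal I$ for all $\varepsilon>0$. For a sequence $(f_n)$ of real functions on a set $X$: $\mathcal I$-pointwise convergence to $0$ means $(f_n(x))$ is $\mathcal I$-convergent to $0$ for each $x$; $\mathcal I$-uniform means $\{n:\exists x\in X\,(|f_n(x)|\ge\varepsilon)\}\in\mathcal I$ for each $\varepsilon>0$; $\mathcal I$-$\sigma$-uniform means $X=\bigcup_{k\in\omega}X_k$ with $(f_n\restriction X_k)$ $\mathcal I$-uniformly convergent to $0$ for each $k$; $\mathcal I$-quasi-normal means there is a sequence $(\varepsilon_n)$ of positive reals $\mathcal I$-convergent to $0$ with $\{n:|f_n(x)|\ge\varepsilon_n\}\in\mathcal I$ for each $x$. $\mathcal C(X)$ = continuous real functions on $X$. Cardinals (convention $\min\emptyset=\infty$, and $\kappa<\infty$ for every cardinal $\kappa$): $\widehat{\mathcal P}_{\mathcal I}$ = sequences $(A_n)\in\mathcal I^\omega$ of pairwise disjoint sets; $\mathcal P_{\mathcal I}$ = those with $\bigcup_nA_n=\omega$; $\mathcal M_{\mathcal I}$ = sequences $(E_k)\in\mathcal I^\omega$ with $E_k\subseteq E_{k+1}$. $\mathfrak b_s(\mathcal I,\mathcal J,\mathcal K)=\min\{|\mathcal E|:\mathcal E\subseteq\widehat{\mathcal P}_{\mathcal K}$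 and for every $(A_n)\in\mathcal P_{\mathcal J}$ there is $(E_n)\in\mathcal E$ with $\bigcup_n(A_{n+1}\cap\bigcup_{i\le n}E_i)\notin\mathcal I\}$; $\mathfrak b_\sigma(\mathcal I,\mathcal J)=\min\{|\mathcal E|:\mathcal E\subseteq\mathcal M_{\mathcal I}$ and for every $(A_n)\in\mathcal M_{\mathcal J}$ there is $(E_n)\in\mathcal E$ with $E_n\not\subseteq A_n$ for infinitely many $n\}$; $\mathrm{add}_\omega(\mathcal I,\mathcal J)=\min\{|\mathcal A|:\mathcal A\subseteq\mathcal I$ and for every $(B_n)\in\mathcal J^\omega$ there is $A\in\mathcal A$ with $A\not\subseteq B_n$ for all $n\}$. *)

(* Defs.v *)
From mathcomp Require Import all_boot all_order all_algebra.
From mathcomp Require Import all_classical all_reals topology normedtype.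
Import numFieldNormedType.Exports.
Set Implicit Arguments. Unset Strict Implicit. Unset Printing Implicit Defensive.
Import Order.TTheory GRing.Theory Num.Theory.
Local Open Scope classical_set_scope.
Local Open Scope ring_scope.

Definition is_ideal (I : set (set nat)) : Prop :=
  [/\ (forall A B, I A -> I B -> I (A `|` B)),
      (forall A B, B `<=` A -> I A -> I B),
      (forall A, finite_set A -> I A) &
      ~ I setT].

Definition Iconv0 (R : realType) (I : set (set nat)) (a : nat -> R) : Prop :=
  forall eps : R, 0 < eps -> I [set n | eps <= `|a n|].

Definition Ipointwise (R : realType) (X : Type) (I : set (set nat))
  (f : nat -> X -> R) : Prop := forall x, Iconv0 I (fun n => f n x).

Definition Iuniform_on (R : realType) (X : Type) (I : set (set nat))
  (f : nat -> X -> R) (Y : set X) : Prop :=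
  forall eps : R, 0 < eps -> I [set n | exists x, Y x /\ eps <= `|f n x|].

Definition Isigma_uniform (R : realType) (X : Type) (I : set (set nat))
  (f : nat -> X -> R) : Prop :=
  exists Xk : nat -> set X, \bigcup_k Xk k = setT /\ forall k, Iuniform_on I f (Xk k).

Definition Iquasi_normal (R : realType) (X : Type) (I : set (set nat))
  (f : nat -> X -> R) : Prop :=
  exists e : nat -> R, [/\ (forall n, 0 < e n), Iconv0 I e &
     forall x, I [set n | e n <= `|f n x|]].

Definition Phat (K : set (set nat)) (A : nat -> set nat) : Prop :=
  (forall n, K (A n)) /\ (forall n m, n <> m -> A n `&` A m = set0).

Definition Ppart (J : set (set nat)) (A : nat -> set nat) : Prop :=
  Phat J A /\ \bigcup_n A n = setT.

Definition Mseq (I : set (set nat)) (E : nat -> set nat) : Prop :=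
  (forall k, I (E k)) /\ (forall k, E k `<=` E k.+1).

(* |X| < |E|  (i.e. not |E| <= |X|: no injection of E into X). *)
Definition card_lt (X T : Type) (E : set T) : Prop :=
  ~ exists g : T -> X, forall a b, E a -> E b -> g a = g b -> a = b.

(* |X| < min {|E| : S E}  (with min of empty = infinity). *)
Definition card_lt_min (X T : Type) (S : set (set T)) : Prop :=
  forall E, S E -> card_lt X E.

Definition bs_family (I J K : set (set nat)) (E : set (nat -> set nat)) : Prop :=
  E `<=` Phat K /\
  forall A, Ppart J A -> exists2 Ev, E Ev &
    ~ I (\bigcup_n (A n.+1 `&` [set x | exists i, (i <= n)%N /\ Ev i x])).

Definition bsigma_family (I J : set (set nat)) (E : set (nat -> set nat)) : Prop :=
  E `<=` Mseq I /\
  forall A, Mseq J A -> exists2 Ev, E Ev &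
    infinite_set [set n | ~ (Ev n `<=` A n)].

Definition addw_family (I J : set (set nat)) (F : set (set nat)) : Prop :=
  F `<=` I /\
  forall B : nat -> set nat, (forall n, J (B n)) ->
    exists2 A, F A & forall n, ~ (A `<=` B n).

Definition lt_bs (X : Type) (I J K : set (set nat)) := card_lt_min X (bs_family I J K).
Definition lt_bsigma (X : Type) (I J : set (set nat)) := card_lt_min X (bsigma_family I J).
Definition lt_addw (X : Type) (I J : set (set nat)) := card_lt_min X (addw_family I J).

(* Main.v *)
Require Import Defs.
From mathcomp Require Import all_boot all_order all_algebra.
From mathcomp Require Import all_classical all_reals topology normedtype.
From mathcomp Require Import finmap.
Import numFieldNormedType.Exports.
Import Order.TTheory GRing.Theory Num.Theory.
Local Open Scope classical_set_scope.
Local Open Scope ring_scope.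

Lemma fin_bound (A : set nat) : finite_set A -> exists m, forall k, A k -> (k < m)%N.
Proof.
move=> /finite_fsetP[B ->]; exists (\max_(i <- B) i).+1 => k /= kB.
by rewrite ltnS; apply: leq_bigmax_seq.
Qed.

Lemma range_not {X : choiceType} (x0 : X) {T} {S : set (set T)} {phi : X -> T} :
  card_lt_min X S -> ~ S (range phi).
Proof.
move=> H HS; apply: (H _ HS); exists (fun t => xget x0 [set x | phi x = t]).
move=> a b [xa _ <-] [xb _ <-] E.
have ha := xgetPex x0 (P := [set x | phi x = phi xa]) (ex_intro _ xa erefl).
have hb := xgetPex x0 (P := [set x | phi x = phi xb]) (ex_intro _ xb erefl).
by rewrite -ha -hb E.
Qed.

Lemma idU (I : set (set nat)) A B : is_ideal I -> I A -> I B -> I (A `|` B).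
Proof. by move=> [h _ _ _]; apply: h. Qed.

Lemma idS (I : set (set nat)) A B : is_ideal I -> B `<=` A -> I A -> I B.
Proof. by move=> [_ h _ _]; apply: h. Qed.

Lemma idF (I : set (set nat)) A : is_ideal I -> finite_set A -> I A.
Proof. by move=> [_ _ h _]; apply: h. Qed.

Arguments idS {I A B}.
Arguments idF {I A}.
Arguments idU {I A B}.

Lemma inv_le {R : realType} {m n : nat} : (m <= n)%N ->
  (n.+1%:R : R)^-1 <= (m.+1%:R)^-1.
Proof. by move=> mn; rewrite lef_pV2 ?posrE ?ltr0Sn // ler_nat ltnS. Qed.

Lemma inv_pos (R : realType) (n : nat) : 0 < (n.+1%:R : R)^-1.
Proof. by rewrite invr_gt0 ltr0Sn. Qed.

Lemma inv_bound {R : realType} {eps : R} : 0 < eps ->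
  exists N, forall n, eps <= (n.+1%:R)^-1 -> (n < N)%N.
Proof.
move=> e0; exists (Num.truncn eps^-1) => n h.
have h1 : n.+1%:R <= eps^-1.
  by rewrite -(invrK (n.+1%:R)) lef_pV2 ?posrE ?invr_gt0 ?ltr0Sn.
have := le_lt_trans h1 (truncnS_gt _).
by rewrite ltr_nat ltnS.
Qed.

Lemma small_inv {R : realType} {eps : R} : 0 < eps ->
  forall k, (Num.truncn eps^-1 <= k)%N -> (k.+1%:R)^-1 <= eps.
Proof.
move=> e0 k hk.
rewrite -[X in _ <= X]invrK lef_pV2 ?posrE ?invr_gt0 ?ltr0Sn //.
apply: ltW; apply: (lt_le_trans (truncnS_gt _)).
by rewrite ler_nat ltnS.
Qed.

Lemma Jfin (J : set (set nat)) (A : nat -> set nat) : is_ideal J ->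
  (forall k, J (A k)) -> forall N, J [set m | exists k, (k < N)%N /\ A k m].
Proof.
move=> hJ hA; elim=> [|N IH].
  by apply: (idS hJ _ (hA 0%N)) => m [k []].
apply: (idS hJ _ (idU hJ (hA N) IH)) => m [k [kN Akm]].
move: kN; rewrite ltnS leq_eqVlt => /orP [/eqP kN|kN].
  by left; rewrite -kN.
by right; exists k.
Qed.

Arguments Jfin {J A}.

Lemma cover_lemma {R : realType} {a : R} {nn} : (nn.+2%:R)^-1 <= a ->
  exists i, (i <= nn)%N /\ (i.+2%:R)^-1 <= a /\ (i = 0%N \/ a < (i.+1%:R)^-1).
Proof.
elim: nn => [|nn IH] h; first by exists 0%N; split => //; split => //; left.
case: (ltP a (nn.+2%:R)^-1) => ha.
  by exists nn.+1; split => //; split => //; right.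
have [i [i1 [i2 i3]]] := IH ha.
by exists i; split => //; apply: leqW.
Qed.

Section Ind.
Variables (R : realType) (X : topologicalType) (x0 : X).

Definition ind (A : set nat) : nat -> X -> R :=
  fun n _ => if pselect (A n) then 1 else 0.

Lemma ind_cont A n : continuous (ind A n).
Proof. exact: cst_continuous. Qed.

Lemma ind_pw (I : set (set nat)) A : is_ideal I -> I A -> Ipointwise I (ind A).
Proof.
move=> hI IA x eps e0; apply: (idS hI _ IA) => n /=; rewrite /ind.
destruct (pselect (A n)) => //=; rewrite normr0 => h.
by have := lt_le_trans e0 h; rewrite ltxx.
Qed.

Lemma ind_sigma (K : set (set nat)) A : is_ideal K ->
  Isigma_uniform K (ind A) -> K A.
Proof.
move=> hK [Xk [cov unif]].
have : (\bigcup_k Xk k) x0 by rewrite cov.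
move=> [k _ xk]; apply: (idS hK _ (unif k 1 ltr01)) => n An.
exists x0; split => //; rewrite /ind; destruct (pselect (A n)) => //=.
by rewrite normr1.
Qed.
End Ind.

Theorem theorem4p3 (R : realType) (X : topologicalType) (x0 : X)
  (I J K : set (set nat)) (hI : is_ideal I) (hJ : is_ideal J) (hK : is_ideal K) :
  [/\
   (* (1) *)
   (lt_bs X J J I ->
      forall f : nat -> X -> R, (forall n, continuous (f n)) ->
        Ipointwise I f -> Iquasi_normal J f) /\
   ((forall f : nat -> X -> R, (forall n, continuous (f n)) ->
        Ipointwise I f -> Iquasi_normal J f) -> I `<=` J),
   (* (2) *)
   (lt_addw X J K ->
      forall f : nat -> X -> R, (forall n, continuous (f n)) ->
        Iquasi_normal J f -> Isigma_uniform K f) /\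
   ((forall f : nat -> X -> R, (forall n, continuous (f n)) ->
        Iquasi_normal J f -> Isigma_uniform K f) -> J `<=` K) &
   (* (3) *)
   (lt_bsigma X I K ->
      forall f : nat -> X -> R, (forall n, continuous (f n)) ->
        Ipointwise I f -> Isigma_uniform K f) /\
   ((forall f : nat -> X -> R, (forall n, continuous (f n)) ->
        Ipointwise I f -> Isigma_uniform K f) -> I `<=` K)].
Proof.
split; split.
- move=> H f _ pw.
  pose Ev (x : X) (i : nat) := [set n | ((i.+2)%:R : R)^-1 <= `|f n x| /\
      (i = 0%N \/ `|f n x| < (i.+1%:R)^-1)].
  have PE : forall x, Phat I (Ev x).
    move=> x; split.
      move=> i; apply: (idS hI _ (pw x _ (inv_pos R i.+1))) => n [] //.
    have key : forall i j n, (i < j)%N -> Ev x i n -> Ev x j n -> False.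
      move=> i j n ij [hi _] [_ [j0|oj]]; first by rewrite j0 in ij.
      have := le_lt_trans hi (lt_le_trans oj (inv_le ij)).
      by rewrite ltxx.
    move=> i j ij; apply/seteqP; split => // n [hi hj].
    case: (ltngtP i j) => [lt|lt|eq]; first exact: (key _ _ _ lt hi hj).
      exact: (key _ _ _ lt hj hi).
    by [].
  have := range_not x0 (phi := Ev) H.
  move=> /not_andP [h|]; first by exfalso; apply: h => _ [x _ <-].
  move=> /existsNP [A /not_implyP [PA H2]].
  have UJ : forall x, J (\bigcup_n (A n.+1 `&` [set m | exists i, (i <= n)%N /\ Ev x i m])).
    move=> x; apply: contrapT => nJ; apply: H2; exists (Ev x) => //; by exists x.
  pose kap (m : nat) := xget 0%N [set k | A k m].
  have kapP : forall m, A (kap m) m.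
    move=> m; apply: (@xgetPex _ 0%N [set k | A k m]).
    have : (\bigcup_n A n) m by rewrite PA.2.
    by move=> [k _ Akm]; exists k.
  have AJ : forall k, J (A k) by move=> k; exact: PA.1.1.
  exists (fun m => ((kap m).+1%:R)^-1); split.
  + by move=> m; apply: inv_pos.
  + move=> eps e0; have [N hN] := inv_bound e0.
    apply: (idS hJ _ (Jfin hJ AJ N)) => m /=.
    rewrite gtr0_norm ?inv_pos // => /hN kN.
    by exists (kap m); split => //; apply: kapP.
  + move=> x; apply: (idS hJ _ (idU hJ (AJ 0%N) (UJ x))) => m /=.
    have := kapP m; case: (kap m) => [A0 _|n An]; first by left.
    move=> h; right; exists n => //; split => //.
    have [i [i1 [i2 i3]]] := cover_lemma h.
    by exists i; split.
- move=> H A IA.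
  have [e [epos econv ef]] := H _ (@ind_cont R X A) (@ind_pw R X I A hI IA).
  apply: (idS hJ _ (idU hJ (ef x0) (econv 1 ltr01))) => n An /=.
  case: (leP (e n) 1) => h; [left|right].
    by rewrite /ind; destruct (pselect (A n)) => //=; rewrite normr1.
  by rewrite gtr0_norm // ltW.
- move=> H f _ [e [epos econv ef]].
  have JK : J `<=` K.
    move=> A JA; apply: contrapT => nKA.
    apply: (range_not x0 (phi := fun _ : X => A) H); split.
      by move=> _ [x _ <-].
    move=> B KB; exists A; first by exists x0.
    by move=> n sub; apply: nKA; apply: (idS hK sub (KB n)).
  have := range_not x0 (phi := fun x => [set n | e n <= `|f n x|]) H.
  move=> /not_andP [h|]; first by exfalso; apply: h => _ [x _ <-]; apply: ef.
  move=> /existsNP [B /not_implyP [KB H2]].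
  have hx : forall x, exists m, [set n | e n <= `|f n x|] `<=` B m.
    move=> x; apply: contrapT => nx; apply: H2.
    exists [set n | e n <= `|f n x|]; first by exists x.
    by move=> n sub; apply: nx; exists n.
  exists (fun m => [set x | [set n | e n <= `|f n x|] `<=` B m]); split.
    by apply/seteqP; split => // x _; have [m hm] := hx x; exists m.
  move=> m eps e0.
  apply: (idS hK _ (idU hK (KB m) (JK _ (econv eps e0)))) => n [x [xm le]].
  have [nB|nB] := pselect (B m n); [left|right] => //.
  have : ~ (e n <= `|f n x|) by move=> /xm.
  move/negP; rewrite -ltNge => lt.
  by rewrite /= gtr0_norm // ltW // (le_lt_trans le lt).
- move=> H A JA; apply: (@ind_sigma R X x0 K A hK); apply: H; first exact: (@ind_cont R X A).
  exists (fun n => (n.+1%:R)^-1); split.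
  + by move=> n; apply: inv_pos.
  + move=> eps e0; have [N hN] := inv_bound e0.
    apply: (idF hJ).
    apply: (sub_finite_set _ (finite_II N)) => n /=.
    by rewrite gtr0_norm ?inv_pos // => /hN.
  + move=> x; apply: (idS hJ _ JA) => n /=; rewrite /ind.
    destruct (pselect (A n)) => //=; rewrite normr0 => h.
    by have := lt_le_trans (inv_pos R n) h; rewrite ltxx.
- move=> H f _ pw.
  pose Ev (x : X) (k : nat) := [set n | (k.+1%:R : R)^-1 <= `|f n x|].
  have := range_not x0 (phi := Ev) H.
  move=> /not_andP [h|].
    exfalso; apply: h => _ [x _ <-]; split.
      by move=> k; apply: pw; apply: inv_pos.
    by move=> k n /= h; apply: le_trans h; apply: inv_le.
  move=> /existsNP [B /not_implyP [MK H2]].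
  have hx : forall x, exists m, forall k, (m <= k)%N -> Ev x k `<=` B k.
    move=> x.
    have : finite_set [set k | ~ (Ev x k `<=` B k)].
      apply: contrapT => ninf; apply: H2; exists (Ev x) => //; by exists x.
    move=> /fin_bound [m hm]; exists m => k mk; apply: contrapT => /hm.
    by rewrite ltnNge mk.
  exists (fun m => [set x | forall k, (m <= k)%N -> Ev x k `<=` B k]); split.
    by apply/seteqP; split => // x _; have [m hm] := hx x; exists m.
  move=> m eps e0.
  pose k := maxn m (Num.truncn eps^-1).
  apply: (idS hK _ (MK.1 k)) => n [x [xm le]].
  apply: (xm k (leq_maxl _ _)); rewrite /Ev /=.
  by apply: le_trans le; apply: small_inv => //; apply: leq_maxr.
- move=> H A IA; apply: (@ind_sigma R X x0 K A hK); apply: H; first exact: (@ind_cont R X A).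
  exact: (@ind_pw R X I A hI IA).
Qed.
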